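(* For all colour indices $A,B$, $$ \mathcal{X}^2\,g^{AB}=\overline{(\gamma_\mu)_{gh}}\,\overline{\epsilon}^{\,CGH}\,\overline{\psi^h_H}\,\overline{\psi^g_G}\,\overline{\psi^c_C}\,\psi^{Ad}\,V^{Bef}\,\big\{2\beta_{ce}(\gamma^\mu)_{fd}+\beta_{cd}(\gamma^\mu)_{fe}\big\}, $$ where $V^{Cab}:=\epsilon^{ABC}\psi^a_A\psi^b_B$ and $\psi^{Ad}:=g^{AB}\psi^d_B$.
   Context: Colour indices $A,B,\dots\in\{1,2,3\}$; bispinor indices $a,b,\dots\in\{1,2,\dot1,\dot2\}$; summation over repeated indices; spacetime indices raised/lowered with $\eta=\mathrm{diag}(1,-1,-1,-1)$. $\Lambda$ is the complex Grassmann algebra generated by the 24 anticommuting generators $\psi^a_A,\overline{\psi^a_A}$. $g^{AB}=\delta^{AB}$, $\epsilon^{ABC}$ is the totally antisymmetric symbol with $\epsilon^{123}=1$ and $\overline{\epsilon}^{ABC}$ its complex conjugate (equal to it). Spinor structures: $\sigma^\mu=(I,\sigma^1,\sigma^2,\sigma^3)$, $\tilde\sigma^\mu=(I,-\sigma^k)$; in the ordering $(1,2,\dot1,\dot2)$, $(\gamma^\mu)^a{}_b=\begin{pmatrix}0&\tilde\sigma^\mu\\ \sigma^\mu&0\end{pmatrix}$, $\epsilon_{ab}=\begin{pmatrix}\varepsilon&0\\0&-\varepsilon\end{pmatrix}$ with $\varepsilon=\begin{pmatrix}0&1\\-1&0\end{pmatrix}$, $(\gamma^\mu)_{cb}:=(\gamma^\mu)^a{}_b\epsilon_{ac}$,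 $\beta_{ab}=\begin{pmatrix}0&I_2\\ I_2&0\end{pmatrix}$, and $\beta_{abcd}:=\tfrac12\overline{(\gamma_\mu)_{ab}}(\gamma^\mu)_{cd}$. Define $\mathcal{J}^{ab}:=\overline{\psi^a_A}g^{AB}\psi^b_B$ and $\mathcal{X}^2:=4\beta_{bcef}\beta_{ad}\{\mathcal{J}^{ad}\mathcal{J}^{be}\mathcal{J}^{cf}+2\mathcal{J}^{ae}\mathcal{J}^{bf}\mathcal{J}^{cd}\}$. *)

(* Defs.v *)
From HB Require Import structures.
From mathcomp Require Import all_boot all_order all_algebra.
Set Implicit Arguments. Unset Strict Implicit. Unset Printing Implicit Defensive.
Import Order.TTheory GRing.Theory Num.Theory.
Local Open Scope ring_scope.

Section Defs.
(* the complex coefficient field: any numeric closed field (e.g. C = R[i]) *)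
Variable C : numClosedFieldType.

(* spinor indices 'I_4 : 0,1,2,3 stand for 1,2,1dot,2dot; colour indices 'I_3;
   spacetime indices 'I_4 *)

(* generator labels: (bar?, (spinor index a, colour index A));
   (false,(a,A)) is psi^a_A, (true,(a,A)) is its bar *)
Definition gen := (bool * ('I_4 * 'I_3))%type.

(* an element of Lambda = coefficients on the basis monomials e_S
   (S a set of generators, e_S = product of the generators of S in the
   increasing order of enum_rank). Addition and scalar multiplication are the
   pointwise ones; the Grassmann product is [gmul] below (NOT the pointwise
   ring product of ffun). *)
Local Notation Grass := {ffun {set gen} -> C}.

(* sign of reordering e_T e_U into e_(T u U) for disjoint T, U *)
Definition gsign (T U : {set gen}) : C :=
  (-1) ^+ #|[set p : gen * gen | [&& p.1 \in T, p.2 \in U &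
                                     (enum_rank p.2 < enum_rank p.1)%N]]|.

Definition gmul (x y : Grass) : Grass :=
  [ffun S : {set gen} => \sum_(T : {set gen} | T \subset S)
                          gsign T (S :\: T) * x T * y (S :\: T)].

Definition ggen (e : gen) : Grass := [ffun S : {set gen} => (S == [set e])%:R].

Definition gscale (c : C) (x : Grass) : Grass := [ffun S : {set gen} => c * x S].
Local Notation "c *g x" := (gscale c x) (at level 40).

Definition psi (a : 'I_4) (A : 'I_3) : Grass := ggen (false, (a, A)).
Definition psib (a : 'I_4) (A : 'I_3) : Grass := ggen (true, (a, A)).

Definition tab2 (t : seq (seq C)) : 'M[C]_2 :=
  \matrix_(i < 2, j < 2) nth 0 (nth [::] t i) j.

Definition sigma_tab (mu : 'I_4) : seq (seq C) :=
  match val mu with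
  | 0 => [:: [:: 1; 0]; [:: 0; 1]]
  | 1 => [:: [:: 0; 1]; [:: 1; 0]]
  | 2 => [:: [:: 0; - 'i]; [:: 'i; 0]]
  | _ => [:: [:: 1; 0]; [:: 0; -1]]
  end.

Definition sigma (mu : 'I_4) : 'M[C]_2 := tab2 (sigma_tab mu).
Definition sigmat (mu : 'I_4) : 'M[C]_2 :=
  if val mu == 0%N then sigma mu else - sigma mu.

(* (gamma^mu)^a_b : row a, column b *)
Definition gamma_up (mu : 'I_4) : 'M[C]_4 :=
  block_mx 0 (sigmat mu) (sigma mu) 0 : 'M[C]_(2 + 2).

Definition veps : 'M[C]_2 := tab2 [:: [:: 0; 1]; [:: -1; 0]].
Definition eps_s : 'M[C]_4 := block_mx veps 0 0 (- veps) : 'M[C]_(2 + 2).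
Definition beta2 : 'M[C]_4 := block_mx 0 1%:M 1%:M 0 : 'M[C]_(2 + 2).

Definition eta (mu nu : 'I_4) : C :=
  if mu == nu then (if val mu == 0%N then 1 else -1) else 0.

(* (gamma^mu)_{cb} := (gamma^mu)^a_b epsilon_{ac} *)
Definition gamma_lo (mu : 'I_4) (c b : 'I_4) : C :=
  \sum_(a < 4) gamma_up mu a b * eps_s a c.

Definition gammaL (mu : 'I_4) (c b : 'I_4) : C :=
  \sum_(nu < 4) eta mu nu * gamma_lo nu c b.

Definition beta4 (a b c d : 'I_4) : C :=
  2^-1 * \sum_(mu < 4) (gammaL mu a b)^* * gamma_lo mu c d.

Definition gcol (A B : 'I_3) : C := (A == B)%:R.
(* totally antisymmetric symbol with eps^{123} = 1 (indices 0,1,2 here) *)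
Definition eps3 (A B D : 'I_3) : C :=
  (((A%:Z - B%:Z) * (B%:Z - D%:Z) * (D%:Z - A%:Z))%R)%:~R / 2.

Local Notation "x ** y" := (gmul x y) (at level 40, left associativity).

Definition Jc (a b : 'I_4) : Grass :=
  \sum_(A < 3) \sum_(B < 3) gcol A B *g (psib a A ** psi b B).

Definition X2 : Grass :=
  4 *g \sum_(a < 4) \sum_(b < 4) \sum_(c < 4) \sum_(d < 4) \sum_(e < 4) \sum_(f < 4)
    (beta4 b c e f * beta2 a d) *g
      (Jc a d ** Jc b e ** Jc c f + 2 *g (Jc a e ** Jc b f ** Jc c d)).

Definition psiU (A : 'I_3) (d : 'I_4) : Grass :=
  \sum_(B < 3) gcol A B *g psi d B.

Definition Vc (D : 'I_3) (a b : 'I_4) : Grass :=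
  \sum_(A < 3) \sum_(B < 3) eps3 A B D *g (psi a A ** psi b B).

Definition rhs_lemma2 (A B : 'I_3) : Grass :=
  \sum_(mu < 4) \sum_(g < 4) \sum_(h < 4) \sum_(D < 3) \sum_(G < 3) \sum_(H < 3)
  \sum_(c < 4) \sum_(d < 4) \sum_(e < 4) \sum_(f < 4)
    ((gammaL mu g h)^* * (eps3 D G H)^* *
      (2 * beta2 c e * gamma_lo mu f d + beta2 c d * gamma_lo mu f e)) *g
    (psib h H ** psib g G ** psib c D ** psiU A d ** Vc B e f).

End Defs.

Notation "c *g x" := (gscale c x) (at level 40).

Notation Grass C := {ffun {set gen} -> C}.

Notation "x ** y" := (gmul x y) (at level 40, left associativity).

(* Main.v *)
From Stdlib Require Import ZArith.
Require Import Defs.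
From mathcomp Require Import all_boot all_order all_algebra.
From mathcomp Require Import ring zify ssrZ.
Import GRing.Theory Num.Theory.
Local Open Scope ring_scope.
Set Implicit Arguments. Unset Strict Implicit. Unset Printing Implicit Defensive.

Section G.
Variable C : numClosedFieldType.
Local Notation Gr := (Grass C).

Definition ebas (S : {set gen}) : Gr := [ffun T => (T == S)%:R].

Lemma gaddE (x y : Gr) S : (x + y) S = x S + y S.
Proof. by rewrite ffunE. Qed.
Lemma goppE (x : Gr) S : (- x) S = - x S.
Proof. by rewrite ffunE. Qed.
Lemma g0E S : (0 : Gr) S = 0.
Proof. by rewrite ffunE. Qed.
Lemma gscaleE c (x : Gr) S : (c *g x) S = c * x S.
Proof. by rewrite ffunE. Qed.
Lemma gsumE I (r : seq I) (P : pred I) (F : I -> Gr) S :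
  (\sum_(i <- r | P i) F i) S = \sum_(i <- r | P i) F i S.
Proof. exact: sum_ffunE. Qed.

Lemma gscaleDr c (x y : Gr) : c *g (x + y) = c *g x + c *g y.
Proof. by apply/ffunP=> S; rewrite !(gscaleE, gaddE) mulrDr. Qed.
Lemma gscaleDl c d (x : Gr) : (c + d) *g x = c *g x + d *g x.
Proof. by apply/ffunP=> S; rewrite !(gscaleE, gaddE) mulrDl. Qed.
Lemma gscaleA c d (x : Gr) : c *g (d *g x) = (c * d) *g x.
Proof. by apply/ffunP=> S; rewrite !gscaleE mulrA. Qed.
Lemma gscale1 (x : Gr) : 1 *g x = x.
Proof. by apply/ffunP=> S; rewrite !gscaleE mul1r. Qed.
Lemma gscale0 (x : Gr) : 0 *g x = 0.
Proof. by apply/ffunP=> S; rewrite !gscaleE g0E mul0r. Qed.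
Lemma gscaler0 c : c *g (0 : Gr) = 0.
Proof. by apply/ffunP=> S; rewrite !gscaleE g0E mulr0. Qed.
Lemma gscaleN1 (x : Gr) : (-1) *g x = - x.
Proof. by apply/ffunP=> S; rewrite !gscaleE goppE mulN1r. Qed.
Lemma gscale_sum I (r : seq I) (P : pred I) (F : I -> Gr) c :
  c *g (\sum_(i <- r | P i) F i) = \sum_(i <- r | P i) c *g F i.
Proof. by apply/ffunP=> S; rewrite gscaleE !gsumE mulr_sumr; apply: eq_bigr=> i _; rewrite gscaleE. Qed.
Lemma gscale_suml I (r : seq I) (P : pred I) (F : I -> C) (x : Gr) :
  (\sum_(i <- r | P i) F i) *g x = \sum_(i <- r | P i) F i *g x.
Proof. by apply/ffunP=> S; rewrite gscaleE !gsumE mulr_suml; apply: eq_bigr=> i _; rewrite gscaleE. Qed.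

Lemma gmulDl (x y z : Gr) : gmul (x + y) z = gmul x z + gmul y z.
Proof.
apply/ffunP=> S; rewrite gaddE !ffunE -big_split /=; apply: eq_bigr=> T _.
by rewrite gaddE mulrDr mulrDl.
Qed.
Lemma gmulDr (x y z : Gr) : gmul x (y + z) = gmul x y + gmul x z.
Proof.
apply/ffunP=> S; rewrite gaddE !ffunE -big_split /=; apply: eq_bigr=> T _.
by rewrite gaddE mulrDr.
Qed.
Lemma gmul0l (x : Gr) : gmul 0 x = 0.
Proof. apply/ffunP=> S; rewrite g0E ffunE big1 // => T _; by rewrite g0E mulr0 mul0r. Qed.
Lemma gmul0r (x : Gr) : gmul x 0 = 0.
Proof. apply/ffunP=> S; rewrite g0E ffunE big1 // => T _; by rewrite g0E mulr0. Qed.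
Lemma gmulZl c (x y : Gr) : gmul (c *g x) y = c *g gmul x y.
Proof.
apply/ffunP=> S; rewrite gscaleE !ffunE mulr_sumr; apply: eq_bigr=> T _.
by rewrite gscaleE; ring.
Qed.
Lemma gmulZr c (x y : Gr) : gmul x (c *g y) = c *g gmul x y.
Proof.
apply/ffunP=> S; rewrite gscaleE !ffunE mulr_sumr; apply: eq_bigr=> T _.
by rewrite gscaleE; ring.
Qed.
Lemma gmul_suml I (r : seq I) (P : pred I) (F : I -> Gr) y :
  gmul (\sum_(i <- r | P i) F i) y = \sum_(i <- r | P i) gmul (F i) y.
Proof.
elim: r => [|i r IH]; first by rewrite !big_nil gmul0l.
by rewrite !big_cons; case: (P i); rewrite ?gmulDl IH.
Qed.
Lemma gmul_sumr I (r : seq I) (P : pred I) (F : I -> Gr) x :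
  gmul x (\sum_(i <- r | P i) F i) = \sum_(i <- r | P i) gmul x (F i).
Proof.
elim: r => [|i r IH]; first by rewrite !big_nil gmul0r.
by rewrite !big_cons; case: (P i); rewrite ?gmulDr IH.
Qed.

Lemma gdecomp (x : Gr) : x = \sum_S x S *g ebas S.
Proof.
apply/ffunP=> S; rewrite gsumE (bigD1 S) //= big1 => [|T /negbTE nT].
  by rewrite gscaleE ffunE eqxx mulr1 addr0.
by rewrite gscaleE ffunE eq_sym nT mulr0.
Qed.


Lemma ggenE (g : gen) : ggen C g = ebas [set g].
Proof. by []. Qed.

Lemma sub_setD_eq (S T U : {set gen}) :
  (S \subset U) && (U :\: S == T) = [disjoint S & T] && (U == S :|: T).
Proof.
apply/idP/idP.
  move/andP=> [sSU /eqP <-]; apply/andP; split.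
    by rewrite disjoints_subset; apply/subsetP=> x xS; rewrite !inE xS.
  by apply/eqP; rewrite -{1}(setID U S) (setIidPr sSU).
move/andP=> [dST /eqP ->]; rewrite subsetUl /= setDUl setDv set0U.
by move: dST; rewrite disjoint_sym => /setDidPl ->.
Qed.

Lemma gmul_e (S T : {set gen}) :
  gmul (ebas S) (ebas T) =
  if [disjoint S & T] then gsign C S T *g ebas (S :|: T) else 0.
Proof.
apply/ffunP=> U; rewrite ffunE.
transitivity (((S \subset U) && (U :\: S == T))%:R * gsign C S (U :\: S)).
  case sSU: (S \subset U).
    rewrite (bigD1 S) //= big1 => [|V /andP [_ /negbTE nV]]; last first.
      by rewrite !ffunE nV mulr0 mul0r.
    by rewrite !ffunE eqxx addr0 mulr1 mulrC.
  rewrite mul0r big1 // => V sVU; rewrite !ffunE.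
  by case: eqP => [eVS|]; [subst V; rewrite sVU in sSU | rewrite mulr0 mul0r].
rewrite sub_setD_eq; case: ifP => dST /=; last by rewrite mul0r g0E.
rewrite gscaleE ffunE; case: eqP => [->|]; last by rewrite mul0r mulr0.
rewrite mul1r mulr1; congr gsign.
by rewrite setDUl setDv set0U; move: dST; rewrite disjoint_sym => /setDidPl.
Qed.

Definition pairs (S U : {set gen}) :=
  [set p : gen * gen | [&& p.1 \in S, p.2 \in U & (enum_rank p.2 < enum_rank p.1)%N]].

Lemma gsignE (S U : {set gen}) : gsign C S U = (-1) ^+ #|pairs S U|.
Proof. by []. Qed.

Lemma cards_dU (A B : {set gen * gen}) : [disjoint A & B] -> #|A :|: B| = (#|A| + #|B|)%N.
Proof.
move=> d; have := cardsUI A B.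
by rewrite (disjoint_setI0 d) cards0 addn0.
Qed.

Lemma gsignUl (S T U : {set gen}) : [disjoint S & T] -> gsign C (S :|: T) U = gsign C S U * gsign C T U.
Proof.
move=> dST; rewrite !gsignE -exprD -cards_dU.
  have -> // : pairs (S :|: T) U = pairs S U :|: pairs T U.
  by apply/setP=> p; rewrite /pairs !inE andb_orl.
rewrite disjoints_subset; apply/subsetP=> p; rewrite !inE => /and3P [pS pU _].
apply/negP=> /and3P [pT _ _]; by rewrite (disjointFr dST pS) in pT.
Qed.

Lemma gsignUr (S T U : {set gen}) : [disjoint T & U] -> gsign C S (T :|: U) = gsign C S T * gsign C S U.
Proof.
move=> dTU; rewrite !gsignE -exprD -cards_dU.
  have -> // : pairs S (T :|: U) = pairs S T :|: pairs S U.
  by apply/setP=> p; rewrite /pairs !inE andb_orl andb_orr.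
rewrite disjoints_subset; apply/subsetP=> p; rewrite !inE => /and3P [_ pT _].
apply/negP=> /and3P [_ pU _]; by rewrite (disjointFr dTU pT) in pU.
Qed.

Lemma disjUl (S T U : {set gen}) : [disjoint S :|: T & U] = [disjoint S & U] && [disjoint T & U].
Proof. by rewrite !disjoints_subset subUset. Qed.
Lemma disjUr (S T U : {set gen}) : [disjoint S & T :|: U] = [disjoint S & T] && [disjoint S & U].
Proof. by rewrite ![[disjoint S & _]]disjoint_sym disjUl. Qed.

Lemma assoc_e (S T U : {set gen}) :
  gmul (gmul (ebas S) (ebas T)) (ebas U) = gmul (ebas S) (gmul (ebas T) (ebas U)).
Proof.
rewrite (gmul_e S T) (gmul_e T U).
case dST: [disjoint S & T]; case dTU: [disjoint T & U];
  rewrite ?gmul0l ?gmul0r ?gmulZl ?gmulZr ?gmul_e ?disjUl ?disjUr ?dST ?dTU //=;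
  case dSU: [disjoint S & U]; rewrite ?gscaler0 //=.
rewrite !gscaleA setUA gsignUl // gsignUr //; congr (_ *g _); ring.
Qed.

Lemma gmul_assoc (x y z : Gr) : gmul (gmul x y) z = gmul x (gmul y z).
Proof.
have h1 S T z' : gmul (gmul (ebas S) (ebas T)) z' = gmul (ebas S) (gmul (ebas T) z').
  rewrite [z']gdecomp !gmul_sumr; apply: eq_bigr=> U _.
  by rewrite !gmulZr assoc_e.
have h2 S y' z' : gmul (gmul (ebas S) y') z' = gmul (ebas S) (gmul y' z').
  rewrite [y']gdecomp !gmul_sumr !gmul_suml gmul_sumr; apply: eq_bigr=> U _.
  by rewrite gmulZr !gmulZl gmulZr h1.
rewrite [x]gdecomp !gmul_suml; apply: eq_bigr=> U _.
by rewrite !gmulZl h2.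
Qed.

Lemma gmul1l (x : Gr) : gmul (ebas set0) x = x.
Proof.
rewrite [X in gmul _ X](gdecomp x) gmul_sumr [in RHS](gdecomp x); apply: eq_bigr=> U _.
rewrite gmulZr gmul_e disjoints_subset sub0set set0U gsignE.
have -> : pairs set0 U = set0 by apply/setP=> p; rewrite /pairs !inE.
by rewrite cards0 expr0 gscale1.
Qed.

Lemma pairs11 (g h : gen) : pairs [set g] [set h] = if (enum_rank h < enum_rank g)%N then [set (g,h)] else set0.
Proof.
apply/setP=> [[x y]]; rewrite !inE /=.
case: ifP=> lt; rewrite !inE ?xpair_eqE.
  by apply/idP/idP=> [/and3P [-> -> _] //| /andP [/eqP -> /eqP ->]]; rewrite !eqxx lt.
by apply/negP=> /and3P [/eqP -> /eqP ->]; rewrite lt.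
Qed.

Lemma ganti (g h : gen) : g != h -> gmul (ggen C g) (ggen C h) = - gmul (ggen C h) (ggen C g).
Proof.
move=> ngh; rewrite !ggenE !gmul_e.
have d : [disjoint [set g] & [set h]] by rewrite disjoints_subset sub1set !inE.
rewrite d disjoint_sym d setUC -gscaleN1 gscaleA !gsignE !pairs11.
have nr : enum_rank g != enum_rank h by apply: contra ngh => /eqP/enum_rank_inj ->.
case: (ltngtP (enum_rank h) (enum_rank g)) => [lt|gt|eq].
- by rewrite cards1 cards0; congr (_ *g _); ring.
- by rewrite cards1 cards0; congr (_ *g _); ring.
- by case/eqP: nr; apply: val_inj; exact: (esym eq).
Qed.

Lemma gsq (g : gen) : gmul (ggen C g) (ggen C g) = 0.
Proof.
rewrite !ggenE gmul_e.
by have -> : [disjoint [set g] & [set g]] = false by rewrite disjoints_subset sub1set !inE eqxx.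
Qed.


Lemma gmul1r (x : Gr) : gmul x (ebas set0) = x.
Proof.
rewrite [X in gmul X _](gdecomp x) gmul_suml [in RHS](gdecomp x); apply: eq_bigr=> U _.
rewrite gmulZl gmul_e disjoints_subset setC0 subsetT setU0 gsignE.
have -> : pairs U set0 = set0 by apply/setP=> p; rewrite /pairs !inE andbF.
by rewrite cards0 expr0 gscale1.
Qed.

Lemma gmulNl (x y : Gr) : gmul (- x) y = - gmul x y.
Proof. by rewrite -!gscaleN1 gmulZl. Qed.

End G.


Definition K := (Z * Z)%type.
Definition k0 : K := (Z0, Z0).
Definition k1 : K := (Zpos xH, Z0).
Definition k2 : K := (Zpos (xO xH), Z0).
Definition ki : K := (Z0, Zpos xH).
Definition kadd (a b : K) : K := (Z.add a.1 b.1, Z.add a.2 b.2).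
Definition kmul (a b : K) : K :=
  (Z.sub (Z.mul a.1 b.1) (Z.mul a.2 b.2), Z.add (Z.mul a.1 b.2) (Z.mul a.2 b.1)).
Definition kopp (a : K) : K := (Z.opp a.1, Z.opp a.2).
Definition kconj (a : K) : K := (a.1, Z.opp a.2).
Definition kz (a : K) : bool := Z.eqb a.1 Z0 && Z.eqb a.2 Z0.
Definition ksum (f : nat -> K) (s : seq nat) : K := foldr (fun i acc => kadd (f i) acc) k0 s.

Definition decode (n : nat) : gen :=
  ((12 <= n)%N, (inord ((n %% 12) %/ 3), inord (n %% 3))).

Definition poly := seq (K * seq nat).
Definition pmul (p q : poly) : poly := [seq (kmul a.1 b.1, a.2 ++ b.2) | a <- p, b <- q].
Definition pscale (k : K) (p : poly) : poly :=
  if kz k then [::] else [seq (kmul k t.1, t.2) | t <- p].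

Fixpoint ins (n : nat) (key : seq nat) : option (bool * seq nat) :=
  match key with
  | [::] => Some (false, [:: n])
  | k :: key' => if n == k then None else if (k < n)%N then Some (false, n :: key)
      else match ins n key' with Some (s, r) => Some (~~ s, k :: r) | None => None end
  end.

Definition normw (w : seq nat) : option (bool * seq nat) :=
  foldr (fun n o => if o is Some (s, key) then
     (if ins n key is Some (s', r) then Some (s (+) s', r) else None) else None)
   (Some (false, [::])) w.

Fixpoint addacc (key : seq nat) (c : K) (acc : seq (seq nat * K)) : seq (seq nat * K) :=
  match acc with
  | [::] => [:: (key, c)]
  | (k, d) :: acc' => if k == key then (k, kadd d c) :: acc' else (k, d) :: addacc key c acc'
  end.

Definition addterm (t : K * seq nat) acc :=
  match normw t.2 with Some (s, r) => addacc r (if s then kopp t.1 else t.1) acc | None => acc end.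

Definition normp (p : poly) acc := foldl (fun a t => addterm t a) acc p.

Definition okw (t : K * seq nat) := all (fun n => (n < 24)%N) t.2.

Definition checkeq (p q : poly) : bool :=
  all okw p && all okw q &&
  all (fun t => kz t.2) (normp (pscale (kopp k1) q) (normp p [::])).

Section S.
Variable C : numClosedFieldType.
Local Notation Gr := (Grass C).

Definition zden (z : Z) : C := (int_of_Z z)%:~R.
Lemma zdenD a b : zden (Z.add a b) = zden a + zden b.
Proof. by rewrite /zden -intrD; congr intmul; exact: (raddfD int_of_Z a b). Qed.
Lemma zdenM a b : zden (Z.mul a b) = zden a * zden b.
Proof. by rewrite /zden -intrM; congr intmul; exact: (rmorphM int_of_Z a b). Qed.
Lemma zdenN a : zden (Z.opp a) = - zden a.
Proof. by rewrite /zden -intrN; congr intmul; exact: (raddfN int_of_Z a). Qed.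
Lemma zdenB a b : zden (Z.sub a b) = zden a - zden b.
Proof. by rewrite /zden -intrB; congr intmul; exact: (raddfB int_of_Z a b). Qed.
Lemma zden0 : zden Z0 = 0. Proof. by []. Qed.
Lemma zdenP p : zden (Zpos p) = (Pos.to_nat p)%:R. Proof. by []. Qed.
Lemma zden1 : zden (Zpos xH) = 1. Proof. exact: (zdenP xH). Qed.
Lemma zdenm1 : zden (Zneg xH) = -1. Proof. by rewrite -zden1 -zdenN. Qed.
Lemma zden2 : zden (Zpos (xO xH)) = 2. Proof. exact: (zdenP (xO xH)). Qed.
Lemma zden_conj a : (zden a)^* = zden a.
Proof. by rewrite /zden rmorph_int. Qed.

Definition cden (k : K) : C := zden k.1 + zden k.2 * 'i.
Lemma cdenD a b : cden (kadd a b) = cden a + cden b.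
Proof. rewrite /cden /= !zdenD; ring. Qed.
Lemma cdenM a b : cden (kmul a b) = cden a * cden b.
Proof.
rewrite /cden /= zdenB zdenD !zdenM.
have hi : 'i * 'i = -1 :> C by rewrite -expr2 sqrCi.
transitivity (zden a.1 * zden b.1 + zden a.2 * zden b.2 * ('i * 'i) + (zden a.1 * zden b.2 + zden a.2 * zden b.1) * 'i); last by ring.
rewrite hi; ring.
Qed.
Lemma cdenN a : cden (kopp a) = - cden a.
Proof. rewrite /cden /= !zdenN; ring. Qed.
Lemma cden_conj a : (cden a)^* = cden (kconj a).
Proof.
rewrite /cden /= !(rmorphD, rmorphM, rmorph_int) [X in _ * X](_ : _ = - 'i); last exact: conjCi.
by rewrite -/(zden _) -/(zden _) zdenN mulrN mulNr.
Qed.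
Lemma cden0 : cden k0 = 0. Proof. by rewrite /cden /= zden0 mul0r addr0. Qed.
Lemma cden1 : cden k1 = 1. Proof. by rewrite /cden /= zden0 zden1 mul0r addr0. Qed.
Lemma cden2 : cden k2 = 2. Proof. by rewrite /cden /= zden0 zden2 mul0r addr0. Qed.
Lemma cden_kz a : kz a -> cden a = 0.
Proof. by case: a => [x y] /andP [/= /Z.eqb_spec -> /Z.eqb_spec ->]; rewrite /cden zden0 mul0r addr0. Qed.
Lemma cden_sum f s : cden (ksum f s) = \sum_(i <- s) cden (f i).
Proof. by elim: s => [|i s IH]; rewrite ?big_nil ?big_cons /= ?cden0 // cdenD IH. Qed.


Lemma decode_psi (a : 'I_4) (A : 'I_3) : decode (a * 3 + A) = (false, (a, A)).
Proof.
have ha := ltn_ord a; have hA := ltn_ord A.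
rewrite /decode; congr (_, (_, _)).
- by apply/negbTE; rewrite -ltnNge; lia.
- apply: val_inj; rewrite /= inordK; lia.
- apply: val_inj; rewrite /= inordK; lia.
Qed.

Lemma decode_psib (a : 'I_4) (A : 'I_3) : decode (12 + (a * 3 + A)) = (true, (a, A)).
Proof.
have ha := ltn_ord a; have hA := ltn_ord A.
rewrite /decode; congr (_, (_, _)).
- apply: val_inj; rewrite /= inordK; lia.
- apply: val_inj; rewrite /= inordK; lia.
Qed.

Lemma decode_inj n m : (n < 24)%N -> (m < 24)%N -> decode n = decode m -> n = m.
Proof.
move=> hn hm [e1 e2 e3].
have f2 : ((n %% 12) %/ 3 = (m %% 12) %/ 3)%N.
  have := congr1 val e2; rewrite /= !inordK //; lia.
have f3 : (n %% 3 = m %% 3)%N.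
  have := congr1 val e3; rewrite /= !inordK //; lia.
move: e1; case: (leqP 12 n); case: (leqP 12 m) => // *; lia.
Qed.

Definition wden (w : seq nat) : Gr :=
  foldr (fun n x => gmul (ggen C (decode n)) x) (ebas C set0) w.

Lemma wden_cat w1 w2 : wden (w1 ++ w2) = gmul (wden w1) (wden w2).
Proof. by elim: w1 => [|n w IH] /=; rewrite ?gmul1l // IH gmul_assoc. Qed.

Definition den (p : poly) : Gr := \sum_(t <- p) cden t.1 *g wden t.2.

Lemma den_cat p q : den (p ++ q) = den p + den q.
Proof. by rewrite /den big_cat. Qed.
Lemma den_nil : den [::] = 0. Proof. by rewrite /den big_nil. Qed.
Lemma den_cons t p : den (t :: p) = cden t.1 *g wden t.2 + den p.
Proof. by rewrite /den big_cons. Qed.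

Lemma den_pscale k p : den (pscale k p) = cden k *g den p.
Proof.
rewrite /pscale; case: ifP => [/cden_kz ->|_]; first by rewrite gscale0 den_nil.
elim: p => [|t p IH]; first by rewrite den_nil gscaler0.
by rewrite /= !den_cons IH gscaleDr gscaleA cdenM.
Qed.

Lemma den_pmul p q : den (pmul p q) = gmul (den p) (den q).
Proof.
elim: p => [|a p IH]; first by rewrite /pmul /= den_nil gmul0l.
rewrite /pmul allpairs_cons den_cat -/(pmul p q) IH den_cons gmulDl; congr (_ + _).
rewrite gmulZl /den gmul_sumr big_map gscale_sum; apply: eq_bigr=> b _.
by rewrite gmulZr /= cdenM wden_cat gscaleA.
Qed.

Lemma den_flat (f : nat -> poly) s : den (flatten [seq f i | i <- s]) = \sum_(i <- s) den (f i).
Proof.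
elim: s => [|i s IH]; first by rewrite big_nil den_nil.
by rewrite /= den_cat IH big_cons.
Qed.

Lemma den_flat_ord (f : nat -> poly) n :
  den (flatten [seq f i | i <- index_iota 0 n]) = \sum_(i < n) den (f i).
Proof. by rewrite den_flat big_mkord. Qed.

Lemma den_gen n : den [:: (k1, [:: n])] = ggen C (decode n).
Proof. by rewrite den_cons den_nil addr0 cden1 gscale1 /= gmul1r. Qed.

Definition sgn (b : bool) : C := if b then -1 else 1.

Lemma ins_all n key s r : (n < 24)%N -> all (fun x => x < 24)%N key ->
  ins n key = Some (s, r) -> all (fun x => x < 24)%N r.
Proof.
elim: key s r => [|k key IH] s r hn /=; first by move=> _ [_ <-] /=; rewrite hn.
move=> /andP [hk hkey]; case: eqP => // _; case: ifP => _.
  by move=> [_ <-] /=; rewrite hn hk hkey.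
case e: (ins n key) => [[s' r']|] // [_ <-] /=; rewrite hk /=; exact: IH e.
Qed.

Lemma ins_ok n key : (n < 24)%N -> all (fun x => x < 24)%N key ->
  gmul (ggen C (decode n)) (wden key) =
  match ins n key with Some (s, r) => sgn s *g wden r | None => 0 end.
Proof.
elim: key => [|k key IH] hn /=; first by rewrite gscale1.
move=> /andP [hk hkey]; case: eqP => [->|nk]; first by rewrite -gmul_assoc gsq gmul0l.
case: ifP => _; first by rewrite gscale1.
rewrite -gmul_assoc ganti; last first.
  by apply/eqP=> /decode_inj; move=> /(_ hn hk).
rewrite gmulNl gmul_assoc IH //.
case: (ins n key) => [[s r]|]; last by rewrite gmul0r oppr0.
rewrite gmulZr -gscaleN1 gscaleA; congr (_ *g _); rewrite /sgn; case: s; ring.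
Qed.

Lemma normw_ok w : all (fun x => x < 24)%N w ->
  (match normw w with Some (s, r) => all (fun x => x < 24)%N r | None => true end) /\
  wden w = match normw w with Some (s, r) => sgn s *g wden r | None => 0 end.
Proof.
elim: w => [|n w IH] /=; first by rewrite gscale1.
move=> /andP [hn hw]; have [] := IH hw; rewrite /normw /= -/(normw w).
case: (normw w) => [[s key]|] /=; last by move=> _ ->; rewrite gmul0r.
move=> hkey ->; rewrite gmulZr ins_ok //.
case e: (ins n key) => [[s' r]|]; last by rewrite gscaler0.
split; first exact: ins_all e.
rewrite gscaleA; congr (_ *g _); clear e; rewrite /sgn; case: s; case: s'; rewrite /=; ring.
Qed.

Definition aden (acc : seq (seq nat * K)) : Gr := \sum_(t <- acc) cden t.2 *g wden t.1.

Lemma addacc_ok key c acc : aden (addacc key c acc) = aden acc + cden c *g wden key.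
Proof.
rewrite /aden; elim: acc => [|[k d] acc IH] /=; first by rewrite big_nil big_cons big_nil add0r addr0.
case: eqP => [->|_]; rewrite !big_cons /=.
  by rewrite cdenD gscaleDl addrAC.
by rewrite IH addrA.
Qed.

Lemma addterm_ok t acc : okw t -> aden (addterm t acc) = aden acc + cden t.1 *g wden t.2.
Proof.
move=> ht; have [_ ->] := normw_ok ht; rewrite /addterm.
case: (normw t.2) => [[s r]|]; last by rewrite gscaler0 addr0.
rewrite addacc_ok gscaleA; congr (_ + _ *g _); rewrite /sgn; case: s; rewrite ?cdenN; ring.
Qed.

Lemma normp_ok p acc : all okw p -> aden (normp p acc) = aden acc + den p.
Proof.
elim: p acc => [|t p IH] acc /=; first by rewrite den_nil addr0.
move=> /andP [ht hp]; rewrite /normp /= -/(normp p _) IH // addterm_ok // den_cons addrA //.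
Qed.

Lemma check_ok p q : checkeq p q -> den p = den q.
Proof.
rewrite /checkeq => /andP [/andP [hp hq] hz].
have hq' : all okw (pscale (kopp k1) q).
  by rewrite /pscale /= all_map.
have e := normp_ok (normp p [::]) hq'.
rewrite (normp_ok _ hp) /aden big_nil add0r in e.
have z : aden (normp (pscale (kopp k1) q) (normp p [::])) = 0.
  rewrite /aden big_seq big1 // => t ht; rewrite cden_kz ?gscale0 //; exact: (allP hz).
rewrite /aden in z; rewrite z den_pscale cdenN cden1 gscaleN1 in e.
by apply/eqP; rewrite -subr_eq0 -e.
Qed.

End S.


Definition sigma_tabK (mu : nat) : seq (seq K) :=
  match mu with
  | 0 => [:: [:: k1; k0]; [:: k0; k1]]
  | 1 => [:: [:: k0; k1]; [:: k1; k0]]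
  | 2 => [:: [:: k0; kopp ki]; [:: ki; k0]]
  | _ => [:: [:: k1; k0]; [:: k0; kopp k1]]
  end.
Definition sigmaK mu i j := nth k0 (nth [::] (sigma_tabK mu) i) j.
Definition sigmatK (mu i j : nat) := if mu == 0%N then sigmaK mu i j else kopp (sigmaK mu i j).
Definition gupK (mu a b : nat) :=
  if (a < 2)%N then (if (b < 2)%N then k0 else sigmatK mu a (b - 2))
  else (if (b < 2)%N then sigmaK mu (a - 2) b else k0).
Definition vepsK (i j : nat) := nth k0 (nth [::] [:: [:: k0; k1]; [:: kopp k1; k0]] i) j.
Definition epsK (a c : nat) :=
  if (a < 2)%N then (if (c < 2)%N then vepsK a c else k0)
  else (if (c < 2)%N then k0 else kopp (vepsK (a - 2) (c - 2))).
Definition b2K (a d : nat) :=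
  if (a < 2)%N then (if (d < 2)%N then k0 else (if a == (d - 2)%N then k1 else k0))
  else (if (d < 2)%N then (if (a - 2)%N == d then k1 else k0) else k0).
Definition etaK (mu nu : nat) := if mu == nu then (if mu == 0%N then k1 else kopp k1) else k0.
Definition gloK (mu c b : nat) := ksum (fun a => kmul (gupK mu a b) (epsK a c)) (index_iota 0 4).
Definition gLK (mu c b : nat) := ksum (fun nu => kmul (etaK mu nu) (gloK nu c b)) (index_iota 0 4).
Definition b4K (a b c d : nat) := ksum (fun mu => kmul (kconj (gLK mu a b)) (gloK mu c d)) (index_iota 0 4).
Definition gcolK (i j : nat) := if i == j then k1 else k0.
Definition e3K (i j k : nat) : K :=
  (Z.div (Z.mul (Z.mul (Z.sub (Z.of_nat i) (Z.of_nat j)) (Z.sub (Z.of_nat j) (Z.of_nat k)))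
                (Z.sub (Z.of_nat k) (Z.of_nat i))) (Zpos (xO xH)), Z0).

Definition psiK (a A : nat) : poly := [:: (k1, [:: (a * 3 + A)%N])].
Definition psibK (a A : nat) : poly := [:: (k1, [:: (12 + (a * 3 + A))%N])].
Definition JcK (a b : nat) : poly :=
  flatten [seq flatten [seq pscale (gcolK A B) (pmul (psibK a A) (psiK b B)) | B <- index_iota 0 3] | A <- index_iota 0 3].
Definition TK (a b c d e f : nat) : poly :=
  pmul (pmul (JcK a d) (JcK b e)) (JcK c f) ++ pscale k2 (pmul (pmul (JcK a e) (JcK b f)) (JcK c d)).
Definition pscaleT2 (a : K) (fb : unit -> K) (p : unit -> poly) : poly :=
  if kz a then [::] else if kz (fb tt) then [::] else pscale (kmul a (fb tt)) (p tt).
Definition X2K : poly :=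
  flatten [seq flatten [seq flatten [seq flatten [seq flatten [seq flatten [seq
    pscaleT2 (kmul k2 (kmul (b4K b c e f) (b2K a d))) (fun _ => k1) (fun _ => TK a b c d e f)
  | f <- index_iota 0 4] | e <- index_iota 0 4] | d <- index_iota 0 4]
  | c <- index_iota 0 4] | b <- index_iota 0 4] | a <- index_iota 0 4].
Definition psiUK (A d : nat) : poly :=
  flatten [seq pscale (gcolK A B) (psiK d B) | B <- index_iota 0 3].
Definition VcK (D a b : nat) : poly :=
  flatten [seq flatten [seq pscale (e3K A B D) (pmul (psiK a A) (psiK b B)) | B <- index_iota 0 3] | A <- index_iota 0 3].
Definition rhsK (A B : nat) : poly :=
  flatten [seq flatten [seq flatten [seq let x1 := kconj (gLK mu g h) in
  flatten [seq flatten [seq flatten [seq let x12 := kmul x1 (kconj (e3K D G H)) in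
  flatten [seq flatten [seq flatten [seq flatten [seq
    pscaleT2 x12 (fun _ => kadd (kmul (kmul k2 (b2K c e)) (gloK mu f d)) (kmul (b2K c d) (gloK mu f e)))
      (fun _ => pmul (pmul (pmul (pmul (psibK h H) (psibK g G)) (psibK c D)) (psiUK A d)) (VcK B e f))
  | f <- index_iota 0 4] | e <- index_iota 0 4] | d <- index_iota 0 4] | c <- index_iota 0 4]
  | H <- index_iota 0 3] | G <- index_iota 0 3] | D <- index_iota 0 3]
  | h <- index_iota 0 4] | g <- index_iota 0 4] | mu <- index_iota 0 4].


Lemma block_mx_nat (R : nmodType) (A B C D : 'M[R]_2) (i j : 'I_4) :
 (block_mx A B C D : 'M_(2+2)) i j =
  if (i < 2)%N then (if (j < 2)%N then A (inord i) (inord j) else B (inord i) (inord (j - 2)))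
  else (if (j < 2)%N then C (inord (i-2)) (inord j) else D (inord (i-2)) (inord (j-2))).
Proof.
have -> : i = unsplit (split (i : 'I_(2+2))) by rewrite splitK.
have -> : j = unsplit (split (j : 'I_(2+2))) by rewrite splitK.
case: (split _) => i'; case: (split _) => j';
 rewrite /= ?block_mxEul ?block_mxEur ?block_mxEdl ?block_mxEdr /= ?ltn_ord ?ltnNge ?leq_addr /= ?addKn ?inord_val //.
Qed.

Section T.
Variable C : numClosedFieldType.

Ltac csimp := rewrite /cden /= ?zden0 ?zden1 ?zdenm1.

Lemma sigmaE (mu : 'I_4) i j : (i < 2)%N -> (j < 2)%N ->
  sigma C mu (inord i) (inord j) = cden C (sigmaK mu i j).
Proof.
move=> hi hj; rewrite /sigma /tab2 mxE !inordK //.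
case: mu => [[|[|[|[|?]]]] ?] //=; case: i hi => [|[|?]] //= _; case: j hj => [|[|?]] //= _;
  csimp; ring.
Qed.

Lemma sigmatE (mu : 'I_4) i j : (i < 2)%N -> (j < 2)%N ->
  sigmat C mu (inord i) (inord j) = cden C (sigmatK mu i j).
Proof.
move=> hi hj; rewrite /sigmat /sigmatK; case: eqP => _; first by rewrite sigmaE.
by rewrite mxE sigmaE // cdenN.
Qed.

Lemma gupE (mu a b : 'I_4) : gamma_up C mu a b = cden C (gupK mu a b).
Proof.
have ha := ltn_ord a; have hb := ltn_ord b.
rewrite /gamma_up block_mx_nat /gupK; case: ifP => h1; case: ifP => h2;
  rewrite ?sigmaE ?sigmatE ?mxE ?cden0 //; lia.
Qed.

Lemma vepsE i j : (i < 2)%N -> (j < 2)%N -> veps C (inord i) (inord j) = cden C (vepsK i j).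
Proof.
move=> hi hj; rewrite /veps /tab2 mxE !inordK //.
case: i hi => [|[|?]] //= _; case: j hj => [|[|?]] //= _; csimp; ring.
Qed.

Lemma epsE (a c : 'I_4) : eps_s C a c = cden C (epsK a c).
Proof.
have ha := ltn_ord a; have hc := ltn_ord c.
rewrite /eps_s block_mx_nat /epsK; case: ifP => h1; case: ifP => h2.
- rewrite vepsE //; lia.
- by rewrite mxE cden0.
- by rewrite mxE cden0.
- rewrite mxE vepsE ?cdenN //; lia.
Qed.

Lemma inord_eq2 i j : (i < 2)%N -> (j < 2)%N -> ((inord i : 'I_2) == inord j) = (i == j).
Proof. by move=> hi hj; rewrite -val_eqE /= !inordK. Qed.

Lemma b2E (a d : 'I_4) : beta2 C a d = cden C (b2K a d).
Proof.
have ha := ltn_ord a; have hd := ltn_ord d.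
rewrite /beta2 block_mx_nat /b2K; case: ifP => h1; case: ifP => h2;
  rewrite ?mxE ?cden0 //.
- rewrite inord_eq2; try lia. by case: eqP; rewrite ?cden1 ?cden0.
- rewrite inord_eq2; try lia. by case: eqP; rewrite ?cden1 ?cden0.
Qed.

Lemma etaE (mu nu : 'I_4) : eta C mu nu = cden C (etaK mu nu).
Proof.
rewrite /eta /etaK; case: (mu =P nu) => [->|ne]; rewrite ?eqxx.
  by case: ifP; rewrite ?cden1 ?cdenN ?cden1.
have -> : (nat_of_ord mu == nat_of_ord nu) = false by apply/eqP=> e; apply: ne; exact: val_inj.
by rewrite cden0.
Qed.

Lemma gcolE (A B : 'I_3) : gcol C A B = cden C (gcolK A B).
Proof.
rewrite /gcol /gcolK; case: (A =P B) => [->|ne]; rewrite ?eqxx ?cden1 //.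
have -> : (nat_of_ord A == nat_of_ord B) = false by apply/eqP=> e; apply: ne; exact: val_inj.
by rewrite cden0.
Qed.

Lemma e3aux (n : int) (z : Z) : n = (int_of_Z z * 2)%R -> n%:~R / 2 = zden C z.
Proof.
move=> ->; rewrite intrM /zden -mulrA mulfV ?mulr1 //.
by rewrite (_ : (2%:~R : C) = 2%:R) // pnatr_eq0.
Qed.

Lemma e3E (A B D : 'I_3) : eps3 C A B D = cden C (e3K A B D).
Proof.
rewrite /eps3 /cden zden0 mul0r addr0; apply: e3aux.
by case: A => [[|[|[|?]]] ?] //; case: B => [[|[|[|?]]] ?] //; case: D => [[|[|[|?]]] ?].
Qed.

Lemma gloE (mu c b : 'I_4) : gamma_lo C mu c b = cden C (gloK mu c b).
Proof.
rewrite /gamma_lo /gloK cden_sum big_mkord; apply: eq_bigr=> a _.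
by rewrite cdenM gupE epsE.
Qed.

Lemma gLE (mu c b : 'I_4) : gammaL C mu c b = cden C (gLK mu c b).
Proof.
rewrite /gammaL /gLK cden_sum big_mkord; apply: eq_bigr=> nu _.
by rewrite cdenM etaE gloE.
Qed.

Lemma b4E (a b c d : 'I_4) : beta4 C a b c d = 2^-1 * cden C (b4K a b c d).
Proof.
rewrite /beta4 /b4K cden_sum big_mkord; congr (_ * _); apply: eq_bigr=> mu _.
by rewrite cdenM -cden_conj gLE gloE.
Qed.

End T.


Fixpoint lexle (s t : seq nat) : bool :=
  match s, t with
  | [::], _ => true
  | _ :: _, [::] => false
  | x :: s', y :: t' => (x < y)%N || ((x == y) && lexle s' t')
  end.

Definition nt (p : poly) : seq (seq nat * K) :=
  foldr (fun t acc => match normw t.2 with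
     | Some (s, r) => (r, if s then kopp t.1 else t.1) :: acc | None => acc end) [::] p.

Fixpoint comp_acc (k : seq nat) (c : K) (l : seq (seq nat * K)) : seq (seq nat * K) :=
  match l with
  | [::] => [:: (k, c)]
  | (k', c') :: l' => if k == k' then comp_acc k (kadd c c') l' else (k, c) :: comp_acc k' c' l'
  end.

Definition allz (l : seq (seq nat * K)) : bool :=
  match l with [::] => true | (k, c) :: l' => all (fun t => kz t.2) (comp_acc k c l') end.

Definition checkeq2 (p q : poly) : bool :=
  all okw p && all okw q &&
  allz (sort (fun a b => lexle a.1 b.1) (nt p ++ nt (pscale (kopp k1) q))).

Definition gflat (k : K) (f : nat -> poly) (s : seq nat) : poly :=
  if kz k then [::] else flatten [seq f i | i <- s].

Definition gloT : seq (seq (seq K)) :=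
  [seq [seq [seq gloK mu c b | b <- iota 0 4] | c <- iota 0 4] | mu <- iota 0 4].
Definition gl (T : seq (seq (seq K))) (mu c b : nat) : K := nth k0 (nth [::] (nth [::] T mu) c) b.

Definition rhsK' (T : seq (seq (seq K))) (A B : nat) : poly :=
  flatten [seq flatten [seq flatten [seq let x1 := kconj (gLK mu g h) in
  flatten [seq flatten [seq flatten [seq let x12 := kmul x1 (kconj (e3K D G H)) in
  gflat x12 (fun c => flatten [seq flatten [seq flatten [seq
    pscaleT2 x12 (fun _ => kadd (kmul (kmul k2 (b2K c e)) (gl T mu f d)) (kmul (b2K c d) (gl T mu f e)))
      (fun _ => pmul (pmul (pmul (pmul (psibK h H) (psibK g G)) (psibK c D)) (psiUK A d)) (VcK B e f))
  | f <- index_iota 0 4] | e <- index_iota 0 4] | d <- index_iota 0 4]) (index_iota 0 4)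
  | H <- index_iota 0 3] | G <- index_iota 0 3] | D <- index_iota 0 3]
  | h <- index_iota 0 4] | g <- index_iota 0 4] | mu <- index_iota 0 4].

Definition all_check_b : bool :=
  let X := X2K in let T := gloT in
  all (fun A => all (fun B => checkeq2 (pscale (gcolK A B) X) (rhsK' T A B)) (iota 0 3)) (iota 0 3).


Section R.
Variable C : numClosedFieldType.

Lemma psiE (a : 'I_4) (A : 'I_3) : psi C a A = den C (psiK a A).
Proof. by rewrite /psiK den_gen decode_psi. Qed.
Lemma psibE (a : 'I_4) (A : 'I_3) : psib C a A = den C (psibK a A).
Proof. by rewrite /psibK den_gen decode_psib. Qed.

Lemma den_pscaleT2 a fb p : den C (pscaleT2 a fb p) = cden C (kmul a (fb tt)) *g den C (p tt).
Proof.
rewrite /pscaleT2 cdenM; case: ifP => [/cden_kz ->|_]; first by rewrite mul0r gscale0 den_nil.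
case: ifP => [/cden_kz ->|_]; first by rewrite mulr0 gscale0 den_nil.
by rewrite den_pscale cdenM.
Qed.

Lemma JcE (a b : 'I_4) : Jc C a b = den C (JcK a b).
Proof.
rewrite /JcK den_flat_ord /Jc; apply: eq_bigr => A _; rewrite den_flat_ord; apply: eq_bigr => B _.
by rewrite den_pscale den_pmul gcolE psiE psibE.
Qed.

Lemma X2E : X2 C = den C X2K.
Proof.
rewrite /X2 /X2K den_flat_ord gscale_sum; apply: eq_bigr => a _.
rewrite den_flat_ord gscale_sum; apply: eq_bigr => b _.
rewrite den_flat_ord gscale_sum; apply: eq_bigr => c _.
rewrite den_flat_ord gscale_sum; apply: eq_bigr => d _.
rewrite den_flat_ord gscale_sum; apply: eq_bigr => e _.
rewrite den_flat_ord gscale_sum; apply: eq_bigr => f _.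
rewrite den_pscaleT2 gscaleA /TK den_cat den_pscale !den_pmul !JcE cden2; congr (_ *g _).
rewrite b4E b2E !cdenM cden1 cden2; by field.
Qed.

Lemma psiUE (A : 'I_3) (d : 'I_4) : psiU C A d = den C (psiUK A d).
Proof.
rewrite /psiUK den_flat_ord /psiU; apply: eq_bigr => B _.
by rewrite den_pscale gcolE psiE.
Qed.

Lemma VcE (D : 'I_3) (a b : 'I_4) : Vc C D a b = den C (VcK D a b).
Proof.
rewrite /VcK den_flat_ord /Vc; apply: eq_bigr => A _; rewrite den_flat_ord; apply: eq_bigr => B _.
by rewrite den_pscale den_pmul e3E !psiE.
Qed.

End R.

Section V.
Variable C : numClosedFieldType.

Lemma nt_ok p : all okw p -> aden C (nt p) = den C p.
Proof.
elim: p => [|t p IH] /=; first by rewrite /aden big_nil den_nil.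
move=> /andP [ht hp]; have [_ e] := normw_ok C ht.
rewrite den_cons e -IH //.
case: (normw t.2) => [[s r]|]; last by rewrite gscaler0 add0r.
rewrite /aden big_cons /= gscaleA; congr (_ *g _ + _).
by rewrite /sgn; case: s; rewrite ?cdenN; ring.
Qed.

Lemma comp_acc_ok k c l : aden C (comp_acc k c l) = cden C c *g wden C k + aden C l.
Proof.
elim: l k c => [|[k' c'] l IH] k c /=; first by rewrite /aden big_cons big_nil.
case: eqP => [<-|_].
  by rewrite IH cdenD gscaleDl /aden big_cons /= addrA.
by rewrite /aden !big_cons /= -/(aden C _) IH.
Qed.

Lemma allz_ok l : allz l -> aden C l = 0.
Proof.
case: l => [|[k c] l] /=; first by rewrite /aden big_nil.
move=> hz; rewrite -[LHS]add0r -[X in X + _](_ : aden C [::] = 0); last by rewrite /aden big_nil.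
have e : aden C ((k, c) :: l) = aden C (comp_acc k c l) by rewrite comp_acc_ok /aden big_cons.
rewrite /aden big_nil add0r -/(aden C _) e /aden big_seq big1 // => t ht.
by rewrite cden_kz ?gscale0 //; exact: (allP hz).
Qed.

Lemma check2_ok p q : checkeq2 p q -> den C p = den C q.
Proof.
rewrite /checkeq2 => /andP [/andP [hp hq] hz].
have hq' : all okw (pscale (kopp k1) q) by rewrite /pscale /= all_map.
have := allz_ok hz; rewrite /aden (perm_big _ (permEl (perm_sort _ _))) -/(aden C _).
rewrite /aden big_cat -!/(aden C _) !nt_ok // den_pscale cdenN cden1 gscaleN1.
by move/eqP; rewrite subr_eq0 => /eqP.
Qed.

Lemma den_gflat k f n : den C (gflat k f (index_iota 0 n)) = if kz k then 0 else \sum_(i < n) den C (f i).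
Proof. by rewrite /gflat; case: ifP => _; rewrite ?den_nil ?den_flat_ord. Qed.

Lemma glE (mu c b : 'I_4) : gl gloT mu c b = gloK mu c b.
Proof.
have hm := ltn_ord mu; have hc := ltn_ord c; have hb := ltn_ord b.
by rewrite /gl /gloT (nth_map 0%N) ?size_iota // (nth_map 0%N) ?size_iota // (nth_map 0%N) ?size_iota // !nth_iota.
Qed.

Lemma rhsE' (A B : 'I_3) : rhs_lemma2 C A B = den C (rhsK' gloT A B).
Proof.
rewrite /rhsK'; cbv zeta.
rewrite /rhs_lemma2 den_flat_ord; apply: eq_bigr => mu _.
rewrite den_flat_ord; apply: eq_bigr => g _.
rewrite den_flat_ord; apply: eq_bigr => h _.
rewrite den_flat_ord; apply: eq_bigr => D _.
rewrite den_flat_ord; apply: eq_bigr => G _.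
rewrite den_flat_ord; apply: eq_bigr => H _.
rewrite den_gflat; case: ifP => z.
  have z0 : (gammaL C mu g h)^* * (eps3 C D G H)^* = 0.
    by rewrite gLE e3E !cden_conj -cdenM cden_kz.
  rewrite big1 // => c _; rewrite big1 // => d _; rewrite big1 // => e _; rewrite big1 // => f _.
  by rewrite z0 mul0r gscale0.
apply: eq_bigr => c _.
rewrite den_flat_ord; apply: eq_bigr => d _.
rewrite den_flat_ord; apply: eq_bigr => e _.
rewrite den_flat_ord; apply: eq_bigr => f _.
rewrite den_pscaleT2 !den_pmul psiUE VcE !psibE !glE; congr (_ *g _).
rewrite gLE e3E !b2E !gloE !cden_conj !cdenM cdenD !cdenM cden2; ring.
Qed.

End V.

Lemma all_check2 : all_check_b = true.
Proof. vm_compute. reflexivity. Qed.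

Unset Implicit Arguments.
Theorem lemma2 (C : numClosedFieldType) (A B : 'I_3) :
  (gcol C A B *g X2 C) = rhs_lemma2 C A B.
Proof.
rewrite X2E gcolE -den_pscale rhsE'; apply: check2_ok.
have hA : (nat_of_ord A \in iota 0 3) by rewrite mem_iota ltn_ord.
have hB : (nat_of_ord B \in iota 0 3) by rewrite mem_iota ltn_ord.
have := all_check2; rewrite /all_check_b => /allP /(_ _ hA) /allP /(_ _ hB).
exact.
Qed.
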